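(* Let $G$ be a $\mathbb{Z}$-graded commutative ring with $G_i=0$ for all $i>0$, and let $H$ be a graded $G$-module such that $H_i$ is an artinian $G_0$-module for all $i\gg0$. Let $X:H\to H$ be a homogeneous $G$-linear map of negative degree. If $\ker(X)$ is almost artinian as a $G$-module, then $H$ is almost artinian as a $G[X]$-module (where the polynomial variable $X$ acts on $H$ via the map $X$).
   Context: For a graded $G$-module $H$ and an integer $r$, $H_{<r}=\bigoplus_{i<r}H_i$ is a graded $G$-submodule and $H_{\ge r}:=H/H_{<r}$. A graded module $H$ over such a ring is almost artinian if there is an integer $r$ such that $H_{\ge r}$ is artinian as a module over that ring. *)

(* Defs.v *)
From HB Require Import structures.
From mathcomp Require Import all_boot all_order all_algebra.
Set Implicit Arguments. Unset Strict Implicit. Unset Printing Implicit Defensive.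
Import Order.TTheory GRing.Theory Num.Theory.
Local Open Scope ring_scope.

Definition add_subgroup (V : zmodType) (S : V -> Prop) : Prop :=
  S 0 /\ (forall x y, S x -> S y -> S (x - y)).

Definition int_direct_sum (V : zmodType) (Vd : int -> V -> Prop) : Prop :=
  (forall x : V, exists (s : seq int) (f : int -> V),
      [/\ uniq s, (forall i, Vd i (f i)) & x = \sum_(i <- s) f i]) /\
  (forall (s : seq int) (f : int -> V), uniq s -> (forall i, Vd i (f i)) ->
      \sum_(i <- s) f i = 0 -> forall i, i \in s -> f i = 0).

Definition graded_ring (R : comPzRingType) (Rd : int -> R -> Prop) : Prop :=
  [/\ forall i, add_subgroup (Rd i),
      forall i j a b, Rd i a -> Rd j b -> Rd (i + j) (a * b)
    & int_direct_sum Rd].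

Definition graded_module (R : comPzRingType) (Rd : int -> R -> Prop)
    (M : lmodType R) (Md : int -> M -> Prop) : Prop :=
  [/\ forall i, add_subgroup (Md i),
      forall i j a x, Rd i a -> Md j x -> Md (i + j) (a *: x)
    & int_direct_sum Md].

Definition submod (R : comPzRingType) (M : lmodType R) (S : R -> Prop)
    (L : M -> Prop) : Prop :=
  [/\ L 0, (forall x y, L x -> L y -> L (x + y))
    & forall a x, S a -> L x -> L (a *: x)].

Definition Gsubmod (R : comPzRingType) (M : lmodType R) (L : M -> Prop) : Prop :=
  submod (fun _ : R => True) L.

(* G[X]-submodule, X acting through the map X : G-submodule stable under X. *)
Definition GXsubmod (R : comPzRingType) (M : lmodType R) (X : M -> M)
    (L : M -> Prop) : Prop :=
  Gsubmod L /\ (forall x, L x -> L (X x)).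

(* The subquotient module Mtop / Nbot (Nbot a submodule of Mtop) is artinian
   for the class of submodules P: descending chain condition on the submodules
   of Mtop/Nbot, i.e. (lattice correspondence) on the P-submodules L with
   Nbot <= L <= Mtop. *)
Definition artinian_subquot (M : Type) (P : (M -> Prop) -> Prop)
    (Nbot Mtop : M -> Prop) : Prop :=
  forall L : nat -> M -> Prop,
    (forall n, [/\ P (L n), (forall x, Nbot x -> L n x)
                 & (forall x, L n x -> Mtop x)]) ->
    (forall n x, L n.+1 x -> L n x) ->
    exists n, forall m, (n <= m)%N -> forall x, L m x <-> L n x.

Definition lt_part (V : zmodType) (Vd : int -> V -> Prop) (r : int) (x : V)
    : Prop :=
  exists (s : seq int) (f : int -> V),
    [/\ all (fun i => i < r) s, (forall i, Vd i (f i)) & x = \sum_(i <- s) f i].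

(* A graded module (grading Md, underlying set Mtop) is almost artinian
   (for the submodule class P) if some H_{>= r} = H / H_{<r} is artinian. *)
Definition almost_artinian (M : zmodType) (P : (M -> Prop) -> Prop)
    (Md : int -> M -> Prop) (Mtop : M -> Prop) : Prop :=
  exists r : int, artinian_subquot P (lt_part Md r) Mtop.

(* Main.v *)
Require Import Defs.
From HB Require Import structures.
From mathcomp Require Import all_boot all_order all_algebra zify.
Import Order.TTheory GRing.Theory Num.Theory.
Local Open Scope ring_scope.
Set Implicit Arguments. Unset Strict Implicit. Unset Printing Implicit Defensive.
Section Graded.
Variables (G : comPzRingType) (Gd : int -> G -> Prop) (H : lmodType G)
  (Hd : int -> H -> Prop).
Hypothesis hR : graded_ring Gd.
Hypothesis hGpos : forall i : int, 0 < i -> forall a, Gd i a -> a = 0.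
Hypothesis hM : graded_module Gd Hd.

Lemma Hd0 i : Hd i 0.
Proof. by case: hM => /(_ i) []. Qed.
Lemma HdB i x y : Hd i x -> Hd i y -> Hd i (x - y).
Proof. by case: hM => /(_ i) [] _ h _ _; apply: h. Qed.
Lemma HdN i x : Hd i x -> Hd i (- x).
Proof. by move=> hx; rewrite -sub0r; apply: HdB => //; apply: Hd0. Qed.
Lemma HdD i x y : Hd i x -> Hd i y -> Hd i (x + y).
Proof. by move=> hx hy; rewrite -(opprK y); apply: HdB => //; apply: HdN. Qed.
Lemma HdZ i j a x : Gd i a -> Hd j x -> Hd (i + j) (a *: x).
Proof. by case: hM => _ h _; apply: h. Qed.
Lemma Hd_sum (I : eqType) (s : seq I) (F : I -> H) i :
  (forall k, k \in s -> Hd i (F k)) -> Hd i (\sum_(k <- s) F k).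
Proof.
elim: s => [|a s IH] h; first by rewrite big_nil; apply: Hd0.
rewrite big_cons; apply: HdD; first by apply: h; rewrite inE eqxx.
by apply: IH => k hk; apply: h; rewrite inE hk orbT.
Qed.

Definition lp (P : pred int) (x : H) := exists l : seq (int * H),
  (forall p, p \in l -> P p.1 /\ Hd p.1 p.2) /\ x = \sum_(p <- l) p.2.

Lemma lp0 (P : pred int) : lp P 0.
Proof. by exists [::]; rewrite big_nil. Qed.
Lemma lpD (P : pred int) x y : lp P x -> lp P y -> lp P (x + y).
Proof.
move=> [l1 [h1 ->]] [l2 [h2 ->]]; exists (l1 ++ l2); rewrite big_cat; split=> //.
by move=> p; rewrite mem_cat => /orP [] ?; [apply: h1| apply: h2].
Qed.
Lemma lpN (P : pred int) x : lp P x -> lp P (- x).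
Proof.
move=> [l [h ->]]; exists [seq (p.1, - p.2) | p <- l]; split.
  move=> p /mapP [q hq ->] /=; have [? ?] := h q hq; split=> //; exact: HdN.
by rewrite big_map sumrN.
Qed.
Lemma lpB (P : pred int) x y : lp P x -> lp P y -> lp P (x - y).
Proof. by move=> hx hy; apply: lpD => //; apply: lpN. Qed.
Lemma lp_hom (P : pred int) i v : P i -> Hd i v -> lp P v.
Proof.
move=> hP hv; exists [:: (i, v)]; rewrite big_seq1; split=> // p.
by rewrite inE => /eqP ->.
Qed.
Lemma lp_mono (P Q : pred int) x : (forall i, P i -> Q i) -> lp P x -> lp Q x.
Proof.
move=> hPQ [l [h ->]]; exists l; split=> // p /h [] ?; split=> //; exact: hPQ.
Qed.
Lemma lp_sum (P : pred int) (I : eqType) (s : seq I) (F : I -> H) :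
  (forall k, k \in s -> lp P (F k)) -> lp P (\sum_(k <- s) F k).
Proof.
elim: s => [|a s IH] h; first by rewrite big_nil; apply: lp0.
rewrite big_cons; apply: lpD; first by apply: h; rewrite inE eqxx.
by apply: IH => k hk; apply: h; rewrite inE hk orbT.
Qed.
Lemma lp_norm (l : seq (int * H)) : (forall p, p \in l -> Hd p.1 p.2) ->
  exists (t : seq int) (f : int -> H), [/\ uniq t, (forall i, Hd i (f i)),
    (forall i, i \in t -> exists2 p, p \in l & p.1 = i) &
    \sum_(p <- l) p.2 = \sum_(i <- t) f i].
Proof.
elim: l => [|[a v] l IH] hl.
  by exists [::], (fun _ => 0); split=> //; [exact: Hd0 | rewrite !big_nil].
have [|t [f [ut hf ht hs]]] := IH.
  by move=> p hp; apply: hl; rewrite inE hp orbT.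
have hv : Hd a v by apply: (hl (a, v)); rewrite inE eqxx.
case: (boolP (a \in t)) => ha.
  exists t, (fun i => if i == a then v + f a else f i); split=> //.
  - by move=> i; case: eqP => [->|_]; [apply: HdD|].
  - move=> i /ht [p hp <-]; exists p => //; by rewrite inE hp orbT.
  rewrite big_cons /= hs (bigD1_seq a) //= (bigD1_seq a ha ut) /= eqxx addrA.
  congr (_ + _); apply: eq_bigr => i /negPf ->; done.
exists (a :: t), (fun i => if i == a then v else f i); split=> //.
- by rewrite /= ha.
- by move=> i; case: eqP => [->|].
- move=> i; rewrite inE => /orP [/eqP ->|/ht [p hp <-]].
    by exists (a, v); rewrite ?inE ?eqxx.
  by exists p => //; rewrite inE hp orbT.
rewrite !big_cons /= eqxx hs; congr (_ + _).
rewrite big_seq_cond [RHS]big_seq_cond; apply: eq_bigr => i /andP [hi _].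
by case: eqP => // ei; move: ha; rewrite -ei hi.
Qed.

Lemma lt_part_lp r x : lt_part Hd r x <-> lp (fun i => i < r) x.
Proof.
split.
  move=> [s [f [hs hf ->]]]; exists [seq (i, f i) | i <- s]; split.
    by move=> p /mapP [i hi ->]; split=> //=; move/allP: hs; apply.
  by rewrite big_map.
move=> [l [hl ->]]; have [|t [f [ut hf ht ->]]] := lp_norm (l := l).
  by move=> p /hl [].
exists t, f; split=> //; apply/allP => i /ht [p /hl [h1 _] <-]; done.
Qed.
Lemma lp_scale (j : int) a x :
  lp (fun i => i < j) x -> lp (fun i => i < j) (a *: x).
Proof.
move=> [l [hl ->]]; rewrite scaler_sumr; apply: lp_sum => p /hl [hp1 hp2].
case: hR => _ _ [/(_ a) [s [g [_ hg ->]]] _].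
rewrite scaler_suml; apply: lp_sum => t _.
case: (ltrP 0 t) => ht.
  by rewrite (hGpos ht (hg t)) scale0r; apply: lp0.
apply: (lp_hom (i := t + p.1)); last by apply: HdZ.
by rewrite -[j]add0r; apply: ler_ltD.
Qed.

Lemma lp_X (X : H -> H) (d : int) :
  {morph X : u v / u + v} -> X 0 = 0 ->
  (forall i x, Hd i x -> Hd (i + d) (X x)) ->
  forall j x, lp (fun i => i < j) x -> lp (fun i => i < j + d) (X x).
Proof.
move=> XD X0 hX j x [l [hl ->]].
exists [seq (p.1 + d, X p.2) | p <- l]; split.
  move=> p /mapP [q /hl [hq1 hq2] ->] /=; split; first by rewrite ltrD2r.
  exact: hX.
rewrite big_map; elim: l {hl} => [|q l IH]; first by rewrite !big_nil.
by rewrite !big_cons XD IH.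
Qed.

Lemma lp_split (P : pred int) j x : lp P x ->
  exists h v, [/\ lp (fun i => P i && (i != j)) h, Hd j v & x = h + v].
Proof.
move=> [l [hl ->]].
exists (\sum_(p <- l | p.1 != j) p.2), (\sum_(p <- l | p.1 == j) p.2); split.
- exists (filter (fun p => p.1 != j) l); rewrite big_filter; split=> //.
  move=> p; rewrite mem_filter; move=> /andP [hj /hl [h1 h2]].
  by rewrite /= hj andbT.
- rewrite -big_filter; apply: Hd_sum => p; rewrite mem_filter.
  by move=> /andP [/eqP <-] /hl [].
rewrite (bigID (fun p : int * H => p.1 == j)) addrC /=.
by congr (_ + _); apply: eq_bigl.
Qed.

Lemma lp_bound x : exists j, lp (fun i => i < j) x.
Proof.
case: hM => _ _ [/(_ x) [s [f [_ hf ->]]] _].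
suff [j hj] : exists j : int, forall i, i \in s -> i < j.
  exists j; exists [seq (i, f i) | i <- s]; rewrite big_map; split=> //.
  by move=> p /mapP [i hi ->]; split=> //=; apply: hj.
elim: s {hf} => [|a s [j hj]]; first by exists 0.
exists (if a < j then j else a + 1) => i; rewrite inE => /orP [/eqP ->|/hj].
  by case: ifP => // _; rewrite ltrDl.
case: ifP => // /negbT; rewrite -leNgt => haj hij.
by apply: (lt_le_trans hij); apply: (le_trans haj); rewrite lerDl.
Qed.
Lemma kerdecomp (X : {linear H -> H}) (d : int) :
  (forall i x, Hd i x -> Hd (i + d) (X x)) ->
  forall r y, lp (fun i => i < r) (X y) ->
  exists k b, [/\ X k = 0, lp (fun i => i < r - d) b & y = k + b].
Proof.
move=> hX r y hy.
case: hM => _ _ [/(_ y) [s [f [us hf ey]]] huniq].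
pose s1 := filter (fun i => r - d <= i) s.
pose s2 := filter (fun i => ~~ (r - d <= i)) s.
pose k := \sum_(i <- s1) f i.
pose b := \sum_(i <- s2) f i.
have eyk : y = k + b.
  rewrite ey /k /b !big_filter (bigID (fun i => r - d <= i)) /=.
  by congr (_ + _); apply: eq_bigl.
have hb : lp (fun i => i < r - d) b.
  apply: lp_sum => i; rewrite mem_filter -ltNge => /andP [hi _].
  exact: lp_hom (hf i).
have hXk : lp (fun i => i < r) (X k).
  have -> : X k = X y - X b by rewrite eyk linearD addrK.
  apply: lpB => //; apply: (lp_mono (P := fun i => i < r - d + d)).
    by move=> i; rewrite subrK.
  by apply: lp_X => //; [apply: linearD | apply: linear0].
have ek : X k = \sum_(i <- s1) X (f i) by rewrite raddf_sum.
move: hXk => [l [hl el]].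
have [|t [g [ut hg ht eg]]] := lp_norm (l := l); first by move=> p /hl [].
have htr : forall j, j \in t -> j < r by move=> j /ht [p /hl [h1 _] <-].
pose F j := if r <= j then X (f (j - d)) else - g j.
have hF0 : forall j, j \in [seq i + d | i <- s1] ++ t -> F j = 0.
  apply: huniq.
  - rewrite cat_uniq map_inj_uniq; last exact: addIr.
    rewrite filter_uniq //= ut andbT; apply/hasPn => j /htr hj.
    apply/mapP => [[i]]; rewrite mem_filter => /andP [hi _] ej.
    by move: hi; rewrite lerBlDr -ej leNgt hj.
  - move=> j; rewrite /F; case: ifP => _; last by apply: HdN.
    by rewrite -[X in Hd X](subrK d); apply: hX.
  rewrite big_cat big_map /=.
  rewrite (eq_big_seq (fun i => X (f i))); last first.
    move=> i; rewrite mem_filter => /andP [hi _]; rewrite /F.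
    by rewrite -lerBlDr hi addrK.
  rewrite [\sum_(j <- t) _](eq_big_seq (fun j => - g j)); last first.
    by move=> j hj; rewrite /F leNgt (htr j hj).
  by rewrite sumrN -eg -el -ek subrr.
exists k, b; split=> //.
rewrite ek big1_seq // => i hi.
move: hi => /= hi.
have := hF0 (i + d); rewrite mem_cat (map_f (fun i => i + d) hi) /= /F.
move: hi; rewrite mem_filter => /andP [hi _].
by rewrite -lerBlDr hi addrK => ->.
Qed.
Lemma chain_mono (T : Type) (S : nat -> T -> Prop) :
  (forall n x, S n.+1 x -> S n x) ->
  forall m n, (m <= n)%N -> forall x, S n x -> S m x.
Proof.
move=> hS m n /subnK <-; elim: (n - m)%N => [|k IH] x //=.
by rewrite addSn => /hS /IH.
Qed.

Lemma gs0 (S : H -> Prop) : Gsubmod S -> S 0.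
Proof. by case. Qed.
Lemma gsD (S : H -> Prop) x y : Gsubmod S -> S x -> S y -> S (x + y).
Proof. by case=> _ h _; apply: h. Qed.
Lemma gsZ (S : H -> Prop) a x : Gsubmod S -> S x -> S (a *: x).
Proof. by case=> _ _ h; apply: h. Qed.
Lemma gsN (S : H -> Prop) x : Gsubmod S -> S x -> S (- x).
Proof. by move=> hS hx; rewrite -scaleN1r; apply: gsZ. Qed.
Lemma gsB (S : H -> Prop) x y : Gsubmod S -> S x -> S y -> S (x - y).
Proof. by move=> hS hx hy; apply: gsD => //; apply: gsN. Qed.

Lemma lp_gs (j : int) : Gsubmod (lp (fun i => i < j)).
Proof.
split; first exact: lp0.
- by move=> x y; apply: lpD.
- by move=> a x _; apply: lp_scale.
Qed.

Lemma Qlemma (r : int) :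
  (forall i, r <= i -> artinian_subquot (submod (Gd 0)) (fun x => x = 0) (Hd i)) ->
  forall m : nat, forall S : nat -> H -> Prop,
  (forall n, [/\ Gsubmod (S n), (forall x, lp (fun i => i < r) x -> S n x)
       & (forall x, S n x -> lp (fun i => i < r + m%:Z) x)]) ->
  (forall n x, S n.+1 x -> S n x) ->
  exists n0, forall n, (n0 <= n)%N -> forall x, S n x <-> S n0 x.
Proof.
move=> hart; elim=> [|m IH] S hS hdec.
  exists 0%N => n _ x; split=> hx.
    by case: (hS 0%N) => _ h _; apply: h; case: (hS n) => _ _ h'; rewrite -[r]addr0; apply: h'.
  by case: (hS n) => _ h _; apply: h; case: (hS 0%N) => _ _ h'; rewrite -[r]addr0; apply: h'.
pose j := r + m%:Z.
have hrj : r <= j by rewrite /j lerDl.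
pose S' n x := S n x /\ lp (fun i => i < j) x.
have [n1 hn1] : exists n0, forall n, (n0 <= n)%N -> forall x, S' n x <-> S' n0 x.
  apply: IH.
- move=> n; case: (hS n) => gS hlo hhi; split.
  + split; first by split; [apply: gs0 | apply: lp0].
    * by move=> x y [? ?] [? ?]; split; [apply: gsD | apply: lpD].
    * by move=> a x _ [? ?]; split; [apply: gsZ | apply: lp_scale].
  + move=> x hx; split; first exact: hlo.
    by apply: lp_mono hx => i hi; apply: (lt_le_trans hi).
  + by move=> x [].
- by move=> n x [? ?]; split => //; apply: hdec.
pose V n v := Hd j v /\ exists h, lp (fun i => i < j) h /\ S n (h + v).
have hVdec : forall n x, V n.+1 x -> V n x.
  by move=> n x [hx [h [hh hs]]]; split=> //; exists h; split=> //; apply: hdec.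
have hVok : forall n, [/\ submod (Gd 0) (V n), (forall x, x = 0 -> V n x)
    & (forall x, V n x -> Hd j x)].
  move=> n; case: (hS n) => gS _ _; split.
  - split.
    + split; first exact: Hd0.
      by exists 0; split; [apply: lp0 | rewrite addr0; apply: gs0].
    + move=> x y [hx [h1 [l1 s1]]] [hy [h2 [l2 s2]]]; split; first exact: HdD.
      exists (h1 + h2); split; first exact: lpD.
      by rewrite addrACA; apply: gsD.
    + move=> a x ha [hx [h1 [l1 s1]]]; split.
        by rewrite -[j]add0r; apply: HdZ.
      exists (a *: h1); split; first exact: lp_scale.
      by rewrite -scalerDr; apply: gsZ.
  - move=> x ->; split; first exact: Hd0.
    by exists 0; split; [apply: lp0 | rewrite addr0; apply: gs0].
  - by move=> x [].
have [n2 hn2] := hart j hrj V hVok hVdec.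
exists (maxn n1 n2) => n hn x; split.
  by apply: (chain_mono hdec hn).
move=> hx.
have hxlp : lp (fun i => i < r + m.+1%:Z) x.
  by case: (hS (maxn n1 n2)) => _ _; apply.
have [h [v [hh hv ex]]] := lp_split j hxlp.
have hh' : lp (fun i => i < j) h.
  apply: lp_mono hh => i /andP [].
  by rewrite intS addrCA addrC ltzD1 lt_neqAle => -> ->.
have hV : V (maxn n1 n2) v by split=> //; exists h; rewrite -ex.
have : V n v.
  have [e1 e2] := hn2 n (leq_trans (leq_maxr _ _) hn) v.
  have [f1 f2] := hn2 (maxn n1 n2) (leq_maxr _ _) v.
  by apply: e2; apply: f1.
move=> [_ [h' [hh'' hs']]].
have hd : S' (maxn n1 n2) (h - h').
  split; last exact: lpB.
  have -> : h - h' = x - (h' + v) by rewrite ex opprD addrACA subrr addr0.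
  apply: gsB => //; first by case: (hS (maxn n1 n2)).
  by apply: (chain_mono hdec hn).
have : S' n (h - h').
  have [e1 e2] := hn1 n (leq_trans (leq_maxl _ _) hn) (h - h').
  have [f1 f2] := hn1 (maxn n1 n2) (leq_maxl _ _) (h - h').
  by apply: e2; apply: f1.
move=> [hS1 _].
have -> : x = (h - h') + (h' + v) by rewrite ex addrA subrK.
by apply: gsD => //; case: (hS n).
Qed.
Lemma Soc (X : {linear H -> H}) (d : int) :
  (forall i x, Hd i x -> Hd (i + d) (X x)) -> d < 0 ->
  forall r r0 : int,
  (forall i, r <= i -> artinian_subquot (submod (Gd 0)) (fun x => x = 0) (Hd i)) ->
  r0 <= r - d ->
  artinian_subquot (@Gsubmod G H) (lt_part (fun i x => Hd i x /\ X x = 0) r0)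
     (fun x => X x = 0) ->
  forall S : nat -> H -> Prop,
  (forall n, [/\ Gsubmod (S n), (forall x, lp (fun i => i < r) x -> S n x)
       & (forall x, S n x -> lp (fun i => i < r) (X x))]) ->
  (forall n x, S n.+1 x -> S n x) ->
  exists n0, forall n, (n0 <= n)%N -> forall x, S n x <-> S n0 x.
Proof.
move=> hX hd r r0 hart hr0 hK S hS hdec.
have [m hm] : exists m : nat, r - d = r + m%:Z.
  case: d hd {hX hr0} => [n|n]; first by rewrite ltNge.
  by move=> _; exists n.+1; rewrite NegzE opprK.
have hrd : r <= r - d by rewrite lerDl oppr_ge0 ltW.
pose B := lp (fun i => i < r - d).
pose S1 n x := S n x /\ B x.
have [n1 hn1] : exists n0, forall n, (n0 <= n)%N -> forall x, S1 n x <-> S1 n0 x.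
  apply: (Qlemma hart (m := m)).
  - move=> n; case: (hS n) => gS hlo hhi; split.
    + split; first by split; [apply: gs0 | apply: lp0].
      * by move=> x y [? ?] [? ?]; split; [apply: gsD | apply: lpD].
      * by move=> a x _ [? ?]; split; [apply: gsZ | apply: lp_scale].
    + move=> x hx; split; first exact: hlo.
      by apply: lp_mono hx => i hi; apply: (lt_le_trans hi).
    + by move=> x [_]; rewrite /B hm.
  - by move=> n x [? ?]; split => //; apply: hdec.
pose T n x := X x = 0 /\ exists s b, [/\ S n s, B b & x = s + b].
have [n2 hn2] : exists n0, forall n, (n0 <= n)%N -> forall x, T n x <-> T n0 x.
  apply: hK.
  - move=> n; case: (hS n) => gS hlo hhi; split.
    + split.
      * split; first exact: linear0.
        by exists 0, 0; split; [apply: gs0 | apply: lp0 | rewrite addr0].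
      * move=> x y [hx [s1 [b1 [h1 h1' e1]]]] [hy [s2 [b2 [h2 h2' e2]]]].
        split; first by rewrite linearD /= hx hy addr0.
        exists (s1 + s2), (b1 + b2); split; [exact: gsD | exact: lpD | ].
        by rewrite e1 e2 addrACA.
      * move=> a x _ [hx [s1 [b1 [h1 h1' e1]]]].
        split; first by rewrite linearZ /= hx scaler0.
        exists (a *: s1), (a *: b1); split; [exact: gsZ | exact: lp_scale |].
        by rewrite e1 scalerDr.
    + move=> x [s [f [hs hf ex]]]; split.
        by rewrite ex raddf_sum big1 // => i _; case: (hf i).
      exists 0, x; split; [exact: gs0 | | by rewrite add0r].
      rewrite ex; apply: lp_sum => i hi; apply: (lp_hom (i := i)); last by case: (hf i).
      by move/allP: hs => /(_ i hi) /= hi'; apply: (lt_le_trans hi').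
    + by move=> x [].
  - move=> n x [hx [s [b [h1 h2 h3]]]]; split=> //; exists s, b; split=> //.
    exact: hdec.
exists (maxn n1 n2) => n hn x; split; first by apply: (chain_mono hdec hn).
move=> hx.
have gS0 : Gsubmod (S (maxn n1 n2)) by case: (hS (maxn n1 n2)).
have gS : Gsubmod (S n) by case: (hS n).
have hXx : lp (fun i => i < r) (X x) by case: (hS (maxn n1 n2)) => _ _; apply.
have [k [b [hk hb ex]]] := kerdecomp hX hXx.
have hT : T (maxn n1 n2) k.
  split=> //; exists x, (- b); split=> //; first exact: lpN.
  by rewrite ex addrK.
have [_ [s' [b' [hs' hb' ek]]]] : T n k.
  by have [e1 e2] := hn2 n (leq_trans (leq_maxr _ _) hn) k;
     have [f1 f2] := hn2 (maxn n1 n2) (leq_maxr _ _) k; apply: e2; apply: f1.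
have hS1 : S1 (maxn n1 n2) (x - s').
  split.
    by apply: gsB => //; apply: (chain_mono hdec hn).
  have -> : x - s' = b' + b by rewrite ex ek addrAC [s' + b']addrC addrK.
  exact: lpD.
have [hS1' _] : S1 n (x - s').
  by have [e1 e2] := hn1 n (leq_trans (leq_maxl _ _) hn) (x - s');
     have [f1 f2] := hn1 (maxn n1 n2) (leq_maxl _ _) (x - s'); apply: e2; apply: f1.
by rewrite -(subrK s' x); apply: gsD.
Qed.
Lemma int_up (a b : int) : exists t : nat, a <= b + t%:Z.
Proof. exists `|a - b|%N; rewrite abszE -lerBlDl; exact: ler_norm. Qed.

Lemma main_sec (X : {linear H -> H}) (d : int) :
  (exists N : int, forall i : int, N <= i ->
     artinian_subquot (submod (Gd 0)) (fun x => x = 0) (Hd i)) ->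
  d < 0 ->
  (forall (i : int) (x : H), Hd i x -> Hd (i + d) (X x)) ->
  almost_artinian (@Gsubmod G H) (fun i x => Hd i x /\ X x = 0)
                  (fun x => X x = 0) ->
  almost_artinian (GXsubmod X) Hd (fun _ => True).
Proof.
move=> [N hN] hd hX [r0 hK].
have [t ht] := int_up r0 N.
pose r := N + t%:Z.
have hrN : N <= r by rewrite /r lerDl.
have hrd : r <= r - d by rewrite lerDl oppr_ge0 ltW.
have hr0 : r0 <= r - d by apply: (le_trans ht).
have hart : forall i, r <= i -> artinian_subquot (submod (Gd 0)) (fun x => x = 0) (Hd i).
  by move=> i hi; apply: hN; apply: (le_trans hrN).
have hSoc := Soc hX hd hart hr0 hK.
have iterD : forall k x y, iter k X (x + y) = iter k X x + iter k X y.
  by move=> k x y; elim: k => [|k IH] //=; rewrite IH linearD.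
have iterZ : forall k a x, iter k X (a *: x) = a *: iter k X x.
  by move=> k a x; elim: k => [|k IH] //=; rewrite IH linearZ.
have iterN : forall k x, iter k X (- x) = - iter k X x.
  by move=> k x; rewrite -scaleN1r iterZ scaleN1r.
have iterB : forall k x y, iter k X (x - y) = iter k X x - iter k X y.
  by move=> k x y; rewrite iterD iterN.
have iter0 : forall k, iter k X 0 = 0.
  by move=> k; have := iterB k 0 0; rewrite !subrr.
have lpXr : forall x, lp (fun i => i < r) x -> lp (fun i => i < r) (X x).
  move=> x hx; apply: (lp_mono (P := fun i => i < r + d)).
    by move=> i hi; apply: (lt_trans hi); rewrite gtrDl.
  by apply: lp_X => //; [apply: linearD | apply: linear0].
have nilp : forall x, exists k, lp (fun i => i < r) (iter k X x).
  move=> x; have [j hj] := lp_bound x; have [u hu] := int_up j r.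
  have hx : lp (fun i => i < r + u%:Z) x by apply: lp_mono hj => i hi; apply: lt_le_trans hu.
  elim: u x hx {hj hu} => [|u IH] x hx; first by exists 0%N; rewrite addr0 in hx.
  have [|k hk] := IH (X x); last by exists k.+1; rewrite iterSr.
  apply: (lp_mono (P := fun i => i < r + u.+1%:Z + d)).
    move=> i hi; apply: (lt_le_trans hi).
    by move: hd; rewrite intS; lia.
  by apply: lp_X => //; [apply: linearD | apply: linear0].
exists r => L hL hLdec.
have gL : forall n, Gsubmod (L n) by move=> n; case: (hL n) => [[]].
have XL : forall n x, L n x -> L n (X x) by move=> n; case: (hL n) => [[]].
have hLlo : forall n x, lp (fun i => i < r) x -> L n x.
  by move=> n x /lt_part_lp hx; case: (hL n) => _ h _; apply: h.
pose B0 := lp (fun i => i < r).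
pose A k n y := exists x, [/\ L n x, B0 (iter k.+1 X x) & B0 (y - iter k X x)].
have hA : forall k n, [/\ Gsubmod (A k n), (forall x, B0 x -> A k n x)
    & (forall y, A k n y -> B0 (X y))].
  move=> k n; split.
  - split.
    + by exists 0; rewrite !iter0 subr0; split; [apply: gs0 | apply: lp0 | apply: lp0].
    + move=> y1 y2 [x1 [l1 a1 b1]] [x2 [l2 b2 c2]]; exists (x1 + x2); split.
      * exact: gsD.
      * by rewrite iterD; apply: lpD.
      * by rewrite iterD opprD addrACA; apply: lpD.
    + move=> a y _ [x [l1 a1 b1]]; exists (a *: x); split.
      * exact: gsZ.
      * by rewrite iterZ; apply: lp_scale.
      * by rewrite iterZ -scalerBr; apply: lp_scale.
  - by move=> x hx; exists 0; rewrite !iter0 subr0; split; [apply: gs0 | apply: lp0 |].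
  - move=> y [x [l1 a1 b1]].
    have -> : X y = X (y - iter k X x) + iter k.+1 X x by rewrite linearB /= subrK.
    by apply: lpD => //; apply: lpXr.
have hAk : forall n k y, A k.+1 n y -> A k n y.
  move=> n k y [x [l1 a1 b1]]; exists (X x); split; first exact: XL.
    by rewrite -iterSr.
  by rewrite -iterSr.
have hAn : forall k n y, A k n.+1 y -> A k n y.
  move=> k n y [x [l1 a1 b1]]; exists x; split=> //; exact: hLdec.
pose C n y := forall k, A k n y.
have [n1 hn1] : exists n0, forall n, (n0 <= n)%N -> forall x, C n x <-> C n0 x.
  apply: hSoc; last by move=> n x hx k; apply: hAn.
  move=> n; split.
  - split.
    + by move=> k; case: (hA k n) => g _ _; apply: gs0.
    + by move=> x y hx hy k; case: (hA k n) => g _ _; apply: gsD.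
    + by move=> a x _ hx k; case: (hA k n) => g _ _; apply: gsZ.
  - by move=> x hx k; case: (hA k n) => _ h _; apply: h.
  - by move=> y hy; case: (hA 0%N n) => _ _ h; apply: h.
have [J hJ] : exists n0, forall k, (n0 <= k)%N -> forall x, A k n1 x <-> A n0 n1 x.
  apply: (hSoc (fun k => A k n1)); last by move=> k x; apply: hAk.
  by move=> k; case: (hA k n1).
have claim1 : forall n k y, (n1 <= n)%N -> (J <= k)%N -> (A k n y <-> A J n1 y).
  move=> n k y hn hk; split.
    by move=> hy; apply/(hJ k hk); apply: (chain_mono (S := fun n => A k n) (hAn k) hn).
  move=> hy.
  have hC : C n1 y.
    move=> k'; case: (leqP J k') => hk'.
      by apply/(hJ k' hk').
    by apply: (chain_mono (S := fun k => A k n1) (hAk n1) (ltnW hk')).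
  by have [e1 e2] := hn1 n hn y; apply: e2.
have claim2 : forall J', exists ns, forall k, (k < J')%N -> forall n, (ns <= n)%N ->
    forall y, A k n y <-> A k ns y.
  elim=> [|J' [ns hns]]; first by exists 0%N.
  have [nJ hnJ] : exists n0, forall n, (n0 <= n)%N -> forall x, A J' n x <-> A J' n0 x.
    apply: (hSoc (fun n => A J' n)); last by move=> n x; apply: hAn.
    by move=> n; case: (hA J' n).
  exists (maxn ns nJ) => k; rewrite ltnS leq_eqVlt => /orP [/eqP ->|hk] n hn y.
    have [e1 e2] := hnJ n (leq_trans (leq_maxr _ _) hn) y.
    have [f1 f2] := hnJ (maxn ns nJ) (leq_maxr _ _) y.
    by split=> h; [apply: f2; apply: e1 | apply: e2; apply: f1].
  have [e1 e2] := hns k hk n (leq_trans (leq_maxl _ _) hn) y.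
  have [f1 f2] := hns k hk (maxn ns nJ) (leq_maxl _ _) y.
  by split=> h; [apply: f2; apply: e1 | apply: e2; apply: f1].
have [ns hns] := claim2 J.
pose nst := maxn ns n1.
have hall : forall n, (nst <= n)%N -> forall k y, A k n y <-> A k nst y.
  move=> n hn k y; case: (leqP J k) => hk.
    have h1 := claim1 n k y (leq_trans (leq_maxr _ _) hn) hk.
    have h2 := claim1 nst k y (leq_maxr _ _) hk.
    by split=> h; [apply/h2/h1 | apply/h1/h2].
  have [e1 e2] := hns k hk n (leq_trans (leq_maxl _ _) hn) y.
  have [f1 f2] := hns k hk nst (leq_maxl _ _) y.
  by split=> h; [apply: f2; apply: e1 | apply: e2; apply: f1].
exists nst => m hm x; split; first by apply: (chain_mono hLdec hm).
move=> hx; have [k hk] := nilp x.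
elim: k x hx hk => [|k IH] x hx hk; first exact: hLlo.
have hAy : A k nst (iter k X x) by exists x; rewrite subrr; split=> //; apply: lp0.
have [x' [l' a' b']] := (hall m hm k (iter k X x)).2 hAy.
have hxx : L m (x - x').
  apply: IH; first by apply: gsB => //; apply: (chain_mono hLdec hm).
  by rewrite iterB.
by rewrite -(subrK x' x); apply: gsD.
Qed.
End Graded.

Unset Implicit Arguments.

Theorem lemmaA3 (G : comPzRingType) (Gd : int -> G -> Prop)
    (H : lmodType G) (Hd : int -> H -> Prop)
    (X : {linear H -> H}) (d : int) :
  graded_ring Gd ->
  (forall i : int, 0 < i -> forall a, Gd i a -> a = 0) ->
  graded_module Gd Hd ->
  (exists N : int, forall i : int, N <= i ->
     artinian_subquot (submod (Gd 0)) (fun x => x = 0) (Hd i)) ->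
  d < 0 ->
  (forall (i : int) (x : H), Hd i x -> Hd (i + d) (X x)) ->
  almost_artinian (@Gsubmod G H) (fun i x => Hd i x /\ X x = 0)
                  (fun x => X x = 0) ->
  almost_artinian (GXsubmod X) Hd (fun _ => True).
Proof.
move=> hR hGpos hM hN hd hX hK.
exact: (main_sec hR hGpos hM hN hd hX hK).
Qed.
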